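(* For $n\ge1$, the number of permutations $\pi\in Av_n(132)$ such that every permutation $\tilde r_\pi(\pi_i)$ ($1\le i\le n$) of size greater than one contains the pattern $231$ equals the coefficient of $x^n$ in $$\frac{1-2x-\sqrt{1-4x+8x^3}}{2x}.$$
   Context: $Av_n(\sigma)$ is the set of permutations of $\{1,\dots,n\}$ avoiding the pattern $\sigma$. For a permutation $\pi=\pi_1\cdots\pi_n$ and an entry $\pi_i$, $r_\pi(\pi_i)$ is the set of entries $\pi_k$ such that $\pi_k\le\pi_i$ and all entries of $\pi$ lying (in position) between $\pi_k$ and $\pi_i$ are $\le\pi_i$ (so $\pi_i\in r_\pi(\pi_i)$); $\tilde r_\pi(\pi_i)$ is the permutation obtained by taking the entries of $r_\pi(\pi_i)$ in their order of appearance in $\pi$ and standardizing them to $1,\dots,|r_\pi(\pi_i)|$. *)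

(* Defs.v *)
From mathcomp Require Import all_boot all_order all_algebra.
Set Implicit Arguments. Unset Strict Implicit. Unset Printing Implicit Defensive.
Import Order.TTheory GRing.Theory Num.Theory.

(* Permutations of {1..n} are represented as sequences of naturals
   (one-line notation); the set of them is [permutations (iota 1 n)]. *)

Definition contains (p sigma : seq nat) : bool :=
  [exists m : (size p).-tuple bool,
     let t := mask m p in
     (size t == size sigma) &&
     [forall i : 'I_(size sigma), forall j : 'I_(size sigma),
        (nth 0 t i < nth 0 t j) == (nth 0 sigma i < nth 0 sigma j)]].

Definition avoids (p sigma : seq nat) : bool := ~~ contains p sigma.

(* r_pi(pi_i) (i is a 0-based position): entries pi_k with pi_k <= pi_i and
   all entries strictly between positions k and i are <= pi_i, listed in
   their order of appearance in pi. *)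
Definition r_seq (p : seq nat) (i : nat) : seq nat :=
  [seq nth 0 p k | k <- iota 0 (size p) &
     (nth 0 p k <= nth 0 p i) &&
     all (fun j => nth 0 p j <= nth 0 p i)
         (iota (minn k i).+1 (maxn k i - minn k i).-1)].

(* standardization of a sequence of distinct numbers to 1..size *)
Definition std (s : seq nat) : seq nat :=
  [seq count (fun y => y <= x) s | x <- s].

Definition rt (p : seq nat) (i : nat) : seq nat := std (r_seq p i).

Definition good (p : seq nat) : bool :=
  all (fun i => (1 < size (rt p i)) ==> contains (rt p i) [:: 2; 3; 1])
      (iota 0 (size p)).

(* Formal power series over rat as coefficient sequences. *)
Local Open Scope ring_scope.

Definition radicand (m : nat) : rat :=
  (m == 0%N)%:R - 4 * (m == 1%N)%:R + 8 * (m == 3%N)%:R.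

Definition is_sqrt_series (a s : nat -> rat) : Prop :=
  s 0%N = 1 /\ forall m : nat, \sum_(k < m.+1) s k * s (m - k)%N = a m.

Definition numer (s : nat -> rat) (m : nat) : rat :=
  (m == 0%N)%:R - 2 * (m == 1%N)%:R - s m.

(* coefficient of x^n in (1 - 2x - s)/(2x) *)
Definition gf_coef (s : nat -> rat) (n : nat) : rat := numer s n.+1 / 2.

(* Main.v *)
Require Import Defs.
From mathcomp Require Import all_boot all_order all_algebra.
Import Order.TTheory GRing.Theory Num.Theory.
From mathcomp Require Import zify ring lra.
Set Implicit Arguments. Unset Strict Implicit. Unset Printing Implicit Defensive.

Lemma contains3 s u v w :
  contains s [:: u; v; w] <->
  exists x y z, subseq [:: x; y; z] s /\
   ((x < y) = (u < v) /\ (x < z) = (u < w) /\ (y < z) = (v < w) /\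
       (y < x) = (v < u) /\ (z < x) = (w < u) /\ (z < y) = (w < v)).
Proof.
split.
  move=> /existsP [m /andP [/eqP Hs /forallP H]].
  move: Hs (mask_subseq m s) H.
  case: (mask m s) => [|x [|y [|z [|]]]] //= _ Hsub H.
  exists x, y, z; split => //.
  have E := fun i j => eqP (forallP (H i) j).
  split; [|split; [|split; [|split; [|split]]]].
  - exact: (E (@Ordinal 3 0 isT) (@Ordinal 3 1 isT)).
  - exact: (E (@Ordinal 3 0 isT) (@Ordinal 3 2 isT)).
  - exact: (E (@Ordinal 3 1 isT) (@Ordinal 3 2 isT)).
  - exact: (E (@Ordinal 3 1 isT) (@Ordinal 3 0 isT)).
  - exact: (E (@Ordinal 3 2 isT) (@Ordinal 3 0 isT)).
  - exact: (E (@Ordinal 3 2 isT) (@Ordinal 3 1 isT)).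
move=> [x [y [z [/subseqP [m Hm Hmask] [H1 [H2 [H3 [H4 [H5 H6]]]]]]]]].
apply/existsP; exists (Tuple (introT eqP Hm)) => /=.
rewrite -Hmask /=; apply/forallP => i; apply/forallP => j.
case: i => [[|[|[|i]]] Hi] //; case: j => [[|[|[|j]]] Hj] //=;
  by rewrite ?ltnn ?H1 ?H2 ?H3 ?H4 ?H5 ?H6.
Qed.

Definition C231 s := exists x y z, subseq [:: x; y; z] s /\ z < x /\ x < y.
Definition C132 s := exists x y z, subseq [:: x; y; z] s /\ x < z /\ z < y.

Lemma C231P s : contains s [:: 2; 3; 1] <-> C231 s.
Proof.
rewrite contains3; split.
  move=> [x [y [z [Hs [H1 [H2 [H3 [H4 [H5 H6]]]]]]]]]; exists x, y, z.
  by rewrite H1 H5.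
move=> [x [y [z [Hs [H1 H2]]]]]; exists x, y, z; split => //.
by repeat split; apply/idP/idP; lia.
Qed.

Lemma C132P s : contains s [:: 1; 3; 2] <-> C132 s.
Proof.
rewrite contains3; split.
  move=> [x [y [z [Hs [H1 [H2 [H3 [H4 [H5 H6]]]]]]]]]; exists x, y, z.
  by rewrite H2 H6.
move=> [x [y [z [Hs [H1 H2]]]]]; exists x, y, z; split => //.
by repeat split; apply/idP/idP; lia.
Qed.

Lemma count_le_split (s : seq nat) x y : x <= y ->
  count (fun t => t <= y) s = count (fun t => t <= x) s + count (fun t => (x < t) && (t <= y)) s.
Proof.
move=> Hxy; elim: s => //= t s ->.
case: (leqP t x) => Htx /=; case: (leqP t y) => Hty /=; lia.
Qed.

Lemma std_mono (s : seq nat) x y : x \in s -> y \in s ->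
  (count (fun t => t <= x) s < count (fun t => t <= y) s) = (x < y).
Proof.
move=> Hx Hy; case: (ltnP x y) => Hxy.
  rewrite (count_le_split s (ltnW Hxy)).
  have : 0 < count (fun t => (x < t) && (t <= y)) s.
    by rewrite -has_count; apply/hasP; exists y => //; rewrite Hxy leqnn.
  lia.
rewrite (count_le_split s Hxy); lia.
Qed.

Lemma subseq3_map (f : nat -> nat) x y z s :
  subseq [:: x; y; z] (map f s) ->
  exists x' y' z', subseq [:: x'; y'; z'] s /\ [/\ x = f x', y = f y' & z = f z'].
Proof.
move=> /subseqP [m Hm]; rewrite -map_mask.
move: (mask_subseq m s); case: (mask m s) => [|x' [|y' [|z' [|]]]] //= Hsub [-> -> ->].
by exists x', y', z'.
Qed.

Lemma C231_std s : C231 (std s) <-> C231 s.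
Proof.
rewrite /std; split.
  move=> [x [y [z [/subseq3_map [x' [y' [z' [Hs [-> -> ->]]]]] [H1 H2]]]]].
  have Hx : x' \in s by apply: (mem_subseq Hs); rewrite !inE eqxx ?orbT.
  have Hy : y' \in s by apply: (mem_subseq Hs); rewrite !inE eqxx ?orbT.
  have Hz : z' \in s by apply: (mem_subseq Hs); rewrite !inE eqxx !orbT.
  exists x', y', z'; split => //.
  by rewrite std_mono // in H1; rewrite std_mono // in H2.
move=> [x [y [z [Hs [H1 H2]]]]].
have Hx : x \in s by apply: (mem_subseq Hs); rewrite !inE eqxx ?orbT.
have Hy : y \in s by apply: (mem_subseq Hs); rewrite !inE eqxx ?orbT.
have Hz : z \in s by apply: (mem_subseq Hs); rewrite !inE eqxx !orbT.
exists (count (fun t => t <= x) s), (count (fun t => t <= y) s), (count (fun t => t <= z) s).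
split; first exact: (map_subseq _ Hs).
by rewrite !std_mono.
Qed.

Lemma subseq_catP (s a b : seq nat) : subseq s (a ++ b) ->
  exists s1 s2, [/\ s = s1 ++ s2, subseq s1 a & subseq s2 b].
Proof.
move=> /subseqP [m Hm ->].
rewrite -(cat_take_drop (size a) m) mask_cat; last first.
  rewrite size_take Hm size_cat; case: ltnP => // H; apply/eqP; rewrite eqn_leq H; lia.
by exists (mask (take (size a) m) a), (mask (drop (size a) m) b); rewrite !mask_subseq.
Qed.

Lemma subseq3_split x y z (a b : seq nat) m :
  subseq [:: x; y; z] (a ++ m :: b) ->
  subseq [:: x; y; z] a \/ subseq [:: x; y; z] b \/ (x \in a /\ z \in b) \/
      (z = m /\ y \in a) \/ (x = m /\ y \in b).
Proof.
move=> /subseq_catP [s1 [s2 [E H1]]].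
rewrite -cat1s => /subseq_catP [s3 [s4 [E2 H3 H4]]]; subst s2.
have mem1 := mem_subseq H1; have mem4 := mem_subseq H4.
case: s3 E H3 => [|w [|w' s3']] E H3; last by move: (size_subseq H3).
2:{ move: H3; rewrite sub1seq inE => /eqP ?; subst w.
  move: E H1 H4 mem1 mem4.
  case: s1 => [|u [|v [|? ?]]] //=.
  - case: s4 => [|u [|v [|]]] //= [-> -> ->] _ _ _ m4. 
    by do 4 right; split => //; apply: m4; rewrite !inE eqxx ?orbT.
  - case: s4 => [|u' [|]] //= [-> -> ->] _ _ m1 m4.
    by right; right; left; split; [apply: m1; rewrite !inE eqxx ?orbT| apply: m4; rewrite !inE eqxx ?orbT].
  - case: s4 => [|] //= [-> -> ->] _ _ m1 _.
    by do 3 right; left; split => //; apply: m1; rewrite !inE eqxx ?orbT.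
  - move=> E; move: (congr1 size E) => /=; rewrite size_cat /=; lia.  }
move: E H1 H4 mem1 mem4.
case: s1 => [|u [|v [|w [|]]]] //=.
- by move=> -> _ H4 _ _; right; left.
- case: s4 => [|u' [|v' [|]]] //= [-> -> ->] _ _ m1 m4.
  by right; right; left; split; [apply: m1; rewrite !inE eqxx ?orbT| apply: m4; rewrite !inE eqxx ?orbT].
- case: s4 => [|u' [|]] //= [-> -> ->] _ _ m1 m4.
  by right; right; left; split; [apply: m1; rewrite !inE eqxx ?orbT| apply: m4; rewrite !inE eqxx ?orbT].
- by case: s4 => //= [[-> -> ->]] H1 _ _ _; left.
Qed.

Lemma subseq_l (a b : seq nat) m s : subseq s a -> subseq s (a ++ m :: b).
Proof. by move=> H; apply: (subseq_trans H); apply: prefix_subseq. Qed.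

Lemma subseq_r (a b : seq nat) m s : subseq s b -> subseq s (a ++ m :: b).
Proof.
move=> H; apply: (subseq_trans H); apply: (subseq_trans (subseq_cons b m)).
exact: suffix_subseq.
Qed.

Lemma subseq_cross (a b : seq nat) m x y : x \in a -> y \in b ->
  subseq [:: x; m; y] (a ++ m :: b).
Proof.
move=> Hx Hy; rewrite -[[:: x; m; y]]/([:: x] ++ m :: [:: y]).
by apply: cat_subseq; rewrite ?sub1seq //= eqxx sub1seq.
Qed.

Lemma C132_cat (a b : seq nat) m :
  all (fun x => x < m) a -> all (fun x => x < m) b ->
  C132 (a ++ m :: b) <->
  C132 a \/ C132 b \/ exists x y, [/\ x \in a, y \in b & x < y].
Proof.
move=> /allP Ha /allP Hb; split.
  move=> [x [y [z [/subseq3_split H [H1 H2]]]]].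
  case: H => [H|[H|[[Hx Hz]|[[E Hy]|[E Hy]]]]].
  - by left; exists x, y, z.
  - by right; left; exists x, y, z.
  - by right; right; exists x, z.
  - by subst z; have := Ha _ Hy; lia.
  - by subst x; have := Hb _ Hy; lia.
case => [[x [y [z [H H']]]]|[[x [y [z [H H']]]]|[x [y [Hx Hy Hxy]]]]].
- by exists x, y, z; split => //; apply: subseq_l.
- by exists x, y, z; split => //; apply: subseq_r.
- exists x, m, y; split; first exact: subseq_cross.
  by split => //; apply: Hb.
Qed.

Lemma C231_cat (a b : seq nat) m :
  all (fun x => x < m) a -> all (fun x => x < m) b ->
  (forall x y, x \in a -> y \in b -> y < x) ->
  C231 (a ++ m :: b) <->
  C231 a \/ C231 b \/ (a != [::] /\ b != [::]).
Proof.
move=> /allP Ha /allP Hb Hab; split.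
  move=> [x [y [z [/subseq3_split H [H1 H2]]]]].
  case: H => [H|[H|[[Hx Hz]|[[E Hy]|[E Hy]]]]].
  - by left; exists x, y, z.
  - by right; left; exists x, y, z.
  - by right; right; split; [case: (a) Hx | case: (b) Hz].
  - by subst z; have := Ha _ Hy; lia.
  - by subst x; have := Hb _ Hy; lia.
case => [[x [y [z [H H']]]]|[[x [y [z [H H']]]]|[]]].
- by exists x, y, z; split => //; apply: subseq_l.
- by exists x, y, z; split => //; apply: subseq_r.
case: a Ha Hab => [|x a] // Ha Hab _; case: b Hb Hab => [|y b] // Hb Hab _.
have Hx : x \in x :: a by rewrite inE eqxx.
have Hy : y \in y :: b by rewrite inE eqxx.
exists x, m, y; split; first exact: subseq_cross.
by split; [apply: Hab | apply: Ha].
Qed.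

Lemma nthL (a b : seq nat) m k : k < size a -> nth 0 (a ++ m :: b) k = nth 0 a k.
Proof. by move=> H; rewrite nth_cat H. Qed.

Lemma nthM (a b : seq nat) m : nth 0 (a ++ m :: b) (size a) = m.
Proof. by rewrite nth_cat ltnn subnn. Qed.

Lemma nthR (a b : seq nat) m j : nth 0 (a ++ m :: b) ((size a).+1 + j) = nth 0 b j.
Proof.
rewrite nth_cat ltnNge addSn ltnW ?ltnS ?leq_addr //=.
by rewrite subSn ?leq_addr // addKn.
Qed.

Lemma nth_le (p : seq nat) m j : all (fun x => x <= m) p -> nth 0 p j <= m.
Proof.
move=> /allP H; case: (ltnP j (size p)) => Hj; first by apply: H; apply: mem_nth.
by rewrite nth_default.
Qed.

Lemma r_seq_max p i : all (fun x => x <= nth 0 p i) p -> r_seq p i = p.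
Proof.
move=> H; rewrite /r_seq (@eq_filter _ _ predT); first by rewrite filter_predT -/(mkseq _ _) mkseq_nth.
move=> k /=; rewrite nth_le //=; apply/allP => j _; exact: nth_le.
Qed.

Lemma r_seqL (a b : seq nat) m i :
  all (fun x => x < m) a -> all (fun x => x < m) b -> i < size a ->
  r_seq (a ++ m :: b) i = r_seq a i.
Proof.
move=> /allP Ha /allP Hb Hi; rewrite /r_seq size_cat /= -{1}[size a]add0n iotaD filter_cat map_cat.
have Hpi : nth 0 (a ++ m :: b) i = nth 0 a i by rewrite nthL.
have Hlt : nth 0 a i < m by apply: Ha; apply: mem_nth.
rewrite (@eq_in_filter _ _ pred0 (iota (0 + (0 + size a)) (size b).+1)); last first.
  move=> k; rewrite mem_iota => /andP [Hk1 Hk2] /=; rewrite Hpi.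
  case: (ltngtP k (size a)) => Hk; first by lia.
    apply/negbTE/nandP; right; apply/negP => /allP /(_ (size a)).
    rewrite nthM mem_iota; have -> : minn k i = i by lia.
    have -> : maxn k i = k by lia.
    move=> H; have : m <= nth 0 a i by apply: H; apply/andP; split; lia.
    lia.
  by subst k; rewrite nthM leqNgt Hlt.
rewrite filter_pred0 cats0 add0n.
have E : {in iota 0 (size a), (fun k => (nth 0 (a ++ m :: b) k <= nth 0 (a ++ m :: b) i) &&
     all (fun j => nth 0 (a ++ m :: b) j <= nth 0 (a ++ m :: b) i)
         (iota (minn k i).+1 (maxn k i - minn k i).-1)) =1
   (fun k => (nth 0 a k <= nth 0 a i) &&
     all (fun j => nth 0 a j <= nth 0 a i)
         (iota (minn k i).+1 (maxn k i - minn k i).-1))}.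
  move=> k; rewrite mem_iota /= => Hk; rewrite Hpi nthL; last by lia.
  congr andb; apply: eq_in_all => j; rewrite mem_iota => Hj.
  by rewrite nthL //; lia.
rewrite (eq_in_filter E); apply/eq_in_map => k; rewrite mem_filter mem_iota => /andP [_ Hk].
by rewrite nthL //; lia.
Qed.

Lemma r_seqR (a b : seq nat) m i :
  all (fun x => x < m) a -> all (fun x => x < m) b -> i < size b ->
  r_seq (a ++ m :: b) ((size a).+1 + i) = r_seq b i.
Proof.
move=> /allP Ha /allP Hb Hi; rewrite /r_seq size_cat /= addnS -addSn iotaD filter_cat map_cat.
set I := (size a).+1 + i.
have Hpi : nth 0 (a ++ m :: b) I = nth 0 b i by rewrite nthR.
have Hlt : nth 0 b i < m by apply: Hb; apply: mem_nth.
rewrite (@eq_in_filter _ _ pred0 (iota 0 (size a).+1)); last first.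
  move=> k; rewrite mem_iota => /andP [Hk1 Hk2] /=; rewrite Hpi.
  case: (ltngtP k (size a)) => Hk; [ | lia | ].
    apply/negbTE/nandP; right; apply/negP => /allP /(_ (size a)).
    rewrite nthM mem_iota; have -> : minn k I = k by rewrite /I; lia.
    have -> : maxn k I = I by rewrite /I; lia.
    move=> H; have : m <= nth 0 b i by apply: H; apply/andP; rewrite /I; split; lia.
    lia.
  by subst k; rewrite nthM leqNgt Hlt.
rewrite filter_pred0 /= add0n.
have -> : iota (size a).+1 (size b) = map (addn (size a).+1) (iota 0 (size b)).
  by rewrite -iotaDl addn0.
rewrite filter_map -map_comp.
have E : {in iota 0 (size b), (preim (addn (size a).+1) (fun k => (nth 0 (a ++ m :: b) k <= nth 0 (a ++ m :: b) I) &&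
     all (fun j => nth 0 (a ++ m :: b) j <= nth 0 (a ++ m :: b) I)
         (iota (minn k I).+1 (maxn k I - minn k I).-1))) =1
   (fun k => (nth 0 b k <= nth 0 b i) &&
     all (fun j => nth 0 b j <= nth 0 b i)
         (iota (minn k i).+1 (maxn k i - minn k i).-1))}.
  move=> k _ /=; rewrite Hpi nthR.
  congr andb.
  rewrite /I -!addn_minr -!addn_maxr subnDl -addnS iotaDl all_map.
  by apply: eq_all => j /=; rewrite nthR.
by rewrite (eq_in_filter E); apply/eq_in_map => k _ /=; rewrite nthR.
Qed.

Lemma goodP p : good p <-> forall i, i < size p -> 1 < size (r_seq p i) -> C231 (r_seq p i).
Proof.
rewrite /good /rt /std; split.
  move=> /allP H i Hi Hs; have := H i; rewrite mem_iota add0n Hi size_map Hs /= => /(_ isT).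
  by move=> /C231P /C231_std.
move=> H; apply/allP => i; rewrite mem_iota add0n /= => Hi; rewrite size_map.
apply/implyP => Hs; apply/C231P; apply/C231_std; exact: H.
Qed.

Lemma exists_max (p : seq nat) : p != [::] -> exists2 i, i < size p & all (fun x => x <= nth 0 p i) p.
Proof.
elim: p => // x p IH _; case: (altP (p =P [::])) => [->|Hp].
  by exists 0 => //=; rewrite leqnn.
have [i Hi Hall] := IH Hp.
case: (leqP x (nth 0 p i)) => Hx.
  by exists i.+1 => //=; rewrite Hx.
exists 0 => //=; rewrite leqnn /=; apply/allP => y Hy.
by have := allP Hall y Hy; lia.
Qed.

Lemma good_max p : good p -> 1 < size p -> C231 p.
Proof.
move=> /goodP H Hs.
have [i Hi Hall] : exists2 i, i < size p & all (fun x => x <= nth 0 p i) p.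
  by apply: exists_max; case: (p) Hs.
by have := H i Hi; rewrite r_seq_max //; apply.
Qed.

Lemma good_cat (a b : seq nat) m :
  all (fun x => x < m) a -> all (fun x => x < m) b ->
  good (a ++ m :: b) <-> [/\ good a, good b & (1 < size (a ++ m :: b) -> C231 (a ++ m :: b))].
Proof.
move=> Ha Hb.
have Hall : all (fun x => x <= nth 0 (a ++ m :: b) (size a)) (a ++ m :: b).
  rewrite nthM all_cat /= leqnn /=; apply/andP; split.
    by apply: sub_all Ha => x /ltnW.
  by apply: sub_all Hb => x /ltnW.
split.
  move=> /goodP H; rewrite size_cat /= in H; split.
  - apply/goodP => i Hi; rewrite -(r_seqL Ha Hb Hi); apply: H; lia.
  - apply/goodP => i Hi; rewrite -(r_seqR Ha Hb Hi); apply: H; lia.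
  - move=> Hs; have := H (size a); rewrite r_seq_max //; apply; [rewrite size_cat /= in Hs; lia | exact: Hs].
move=> [/goodP H1 /goodP H2 H3]; apply/goodP => i; rewrite size_cat /= => Hi.
case: (ltngtP i (size a)) => Hia.
- by rewrite r_seqL //; apply: H1.
- have -> : i = (size a).+1 + (i - (size a).+1) by lia.
  rewrite r_seqR //; last by lia.
  apply: H2; lia.
- subst i; rewrite r_seq_max // => Hs; apply: H3; exact: Hs.
Qed.

Definition P (p : seq nat) := avoids p [:: 1; 3; 2] && good p.

Lemma avoidP p : avoids p [:: 1; 3; 2] <-> ~ C132 p.
Proof.
rewrite /avoids; split; first by move=> /negP H /C132P.
by move=> H; apply/negP => /C132P.
Qed.

Lemma P_cat (a b : seq nat) m : uniq (a ++ m :: b) ->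
  all (fun x => x < m) a -> all (fun x => x < m) b ->
  P (a ++ m :: b) <->
  [/\ P a, P b, (forall x y, x \in a -> y \in b -> y < x) &
      (1 < size (a ++ m :: b) -> C231 (a ++ m :: b))].
Proof.
move=> U Ha Hb.
have Dis : forall x y, x \in a -> y \in b -> x != y.
  move=> x y Hx Hy; apply/eqP => E; subst y.
  move: U; rewrite cat_uniq => /and3P [_ /hasP H _]; apply: H.
  by exists x; rewrite // inE Hy orbT.
rewrite /P; split.
  move=> /andP [/avoidP Hav /(good_cat Ha Hb) [Hga Hgb Hc]].
  have Hcross : forall x y, x \in a -> y \in b -> y < x.
    move=> x y Hx Hy; have := Dis _ _ Hx Hy; case: (ltngtP x y) => //= Hxy _.
    by exfalso; apply: Hav; apply/(C132_cat Ha Hb); right; right; exists x, y.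
  split => //.
  - by rewrite Hga andbT; apply/avoidP => H; apply: Hav; apply/(C132_cat Ha Hb); left.
  - by rewrite Hgb andbT; apply/avoidP => H; apply: Hav; apply/(C132_cat Ha Hb); right; left.
move=> [/andP [/avoidP Ha1 Ha2] /andP [/avoidP Hb1 Hb2] Hcross Hc].
apply/andP; split; last by apply/(good_cat Ha Hb).
apply/avoidP => /(C132_cat Ha Hb) [//|[//|[x [y [Hx Hy Hxy]]]]].
by have := Hcross _ _ Hx Hy; lia.
Qed.

Lemma C231_cons m (b : seq nat) : all (fun x => x < m) b -> C231 (m :: b) <-> C231 b.
Proof.
move=> Hb; have := @C231_cat [::] b m isT Hb (fun x y (H : x \in [::]) => False_ind _ (notF H)).
rewrite /= => ->; split; [by case=> [[x [y [z [H _]]]]|[|[]]] | by right; left].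
Qed.

Lemma C231_rcons m (a : seq nat) : all (fun x => x < m) a -> C231 (a ++ [:: m]) <-> C231 a.
Proof.
move=> Ha; have := @C231_cat a [::] m Ha isT (fun x y _ (H : y \in [::]) => False_ind _ (notF H)).
move=> ->; split; [by case=> [//|[[x [y [z [H _]]]]|[_]]] | by left].
Qed.

Lemma P_nil : P [::].
Proof.
apply/andP; split; last by [].
by apply/avoidP => [[x [y [z []]]]].
Qed.

Lemma C231_small (b : seq nat) : size b <= 2 -> ~ C231 b.
Proof. by move=> Hs [x [y [z [/size_subseq H _]]]]; move: H => /=; lia. Qed.

Definition Fil (s : seq nat) := filter P (permutations s).
Definition N c n := count P (permutations (iota c n)).

Lemma mem_Fil t s : (t \in Fil s) = P t && perm_eq t s.
Proof. by rewrite mem_filter mem_permutations. Qed.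

Lemma size_Fil s : size (Fil s) = count P (permutations s).
Proof. exact: size_filter. Qed.

Lemma sub_perm_iota (s : seq nat) c n : uniq s -> {subset s <= iota c n} -> size s = n ->
  perm_eq s (iota c n).
Proof.
move=> U H Hs; apply: uniq_perm => //; first exact: iota_uniq.
by apply: (uniq_min_size U H _).2; rewrite size_iota Hs.
Qed.

Lemma inj_split m (a a' b b' : seq nat) : m \notin a -> m \notin a' ->
  a ++ m :: b = a' ++ m :: b' -> a = a' /\ b = b'.
Proof.
move=> Ha Ha' E.
have Hs : size a = size a'.
  have := congr1 (index m) E; rewrite !index_cat (negbTE Ha) (negbTE Ha') /= eqxx !addn0.
  done.
split.
  have := congr1 (take (size a)) E; rewrite (take_size_cat _ (erefl _)).
  by rewrite (take_size_cat _ (esym Hs)).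
have := congr1 (drop (size a).+1) E; rewrite -!cat_rcons (drop_size_cat _ (size_rcons _ _)).
by rewrite (drop_size_cat _ (etrans (size_rcons _ _) (congr1 S (esym Hs)))).
Qed.

Lemma recompose c k j (a b : seq nat) : j <= k ->
  perm_eq a (iota (c + j) (k - j)) -> perm_eq b (iota c j) ->
  perm_eq (a ++ (c + k) :: b) (iota c k.+1).
Proof.
move=> Hj Ha Hb.
have -> : iota c k.+1 = iota c j ++ iota (c + j) (k - j) ++ [:: c + k].
  have E1 : k.+1 = (j + (k - j)) + 1 by lia.
  rewrite E1 !iotaD -catA subnKC //.
rewrite -cat1s catA perm_catC; apply: perm_cat => //.
by rewrite cats1 -cats1 perm_cat2r.
Qed.

Lemma decomp c k t : perm_eq t (iota c k.+1) -> P t ->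
  exists j a b, [/\ j <= k, t = a ++ (c + k) :: b,
     a \in Fil (iota (c + j) (k - j)) & b \in Fil (iota c j)].
Proof.
move=> Hp HP.
have U : uniq t by rewrite (perm_uniq Hp) iota_uniq.
have memt : forall x, (x \in t) = (c <= x < c + k.+1) by move=> x; rewrite (perm_mem Hp) mem_iota.
have Hsz : size t = k.+1 by rewrite (perm_size Hp) size_iota.
remember (c + k) as m eqn:Em.
have Hm : m \in t by rewrite memt; lia.
have [a [b Et]] : exists a b, t = a ++ m :: b by case/splitPr: Hm => a b; exists a, b.
subst t.
move: (U); rewrite cat_uniq => /and3P [Ua /hasPn Hdis /= /andP [mb Ub]].
have ma : m \notin a by apply/negP => H; have := Hdis m; rewrite inE eqxx H => /(_ isT).
have Ha : all (fun x => x < m) a.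
  apply/allP => x Hx; have : x \in a ++ m :: b by rewrite mem_cat Hx.
  rewrite memt => /andP [_ H]; have : x != m by apply/eqP => E; subst x; rewrite Hx in ma.
  lia.
have Hb : all (fun x => x < m) b.
  apply/allP => x Hx; have : x \in a ++ m :: b by rewrite mem_cat inE Hx !orbT.
  rewrite memt => /andP [_ H]; have : x != m by apply/eqP => E; subst x; rewrite Hx in mb.
  lia.
have [Pa Pb Hcross _] := (P_cat U Ha Hb).1 HP.
rewrite size_cat /= in Hsz.
remember (size b) as j eqn:Ej.
have Hbsub : {subset b <= iota c j}.
  move=> y Hy; rewrite mem_iota.
  have : y \in a ++ m :: b by rewrite mem_cat inE Hy !orbT.
  rewrite memt => /andP [H1 _]; rewrite H1 /=.
  rewrite ltnNge; apply/negP => Hyj.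
  have Hy' := allP Hb y Hy.
  have : size a <= size (iota y.+1 (m - y.+1)).
    apply: uniq_leq_size => // x Hx; rewrite mem_iota.
    have := Hcross _ _ Hx Hy; have := allP Ha x Hx.
    move=> h1 h2; rewrite h2 /=; move: h1 h2 Hy'; clear; lia.
  rewrite size_iota; move: Hsz Ej Em Hyj Hy'; clear; lia.
have Pbi : perm_eq b (iota c j) by apply: sub_perm_iota.
have Pai : perm_eq a (iota (c + j) (k - j)).
  apply: sub_perm_iota => //; last by move: Hsz Ej; clear; lia.
  move=> x Hx; rewrite mem_iota.
  have := allP Ha x Hx.
  have : x \in a ++ m :: b by rewrite mem_cat Hx.
  rewrite memt => /andP [H1 _].
  have : x \notin iota c j.
    rewrite -(perm_mem Pbi); apply/negP => Hxb.
    by have := Hdis x; rewrite inE Hxb orbT Hx => /(_ isT).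
  rewrite mem_iota; move: H1 Em; clear; lia.
exists j, a, b; split => //; first by move: Hsz Ej; clear; lia.
- by rewrite mem_Fil Pa Pai.
- by rewrite mem_Fil Pb Pbi.
Qed.

Lemma Fil_nil : Fil [::] = [:: [::]].
Proof. by rewrite /Fil /= P_nil. Qed.

Definition AB c k j :=
  [seq (a, b) | a <- Fil (iota (c + j) (k - j)), b <- Fil (iota c j)].
Definition L c k := [seq ab.1 ++ (c + k) :: ab.2 | j <- iota 0 k.+1, ab <- AB c k j].

Lemma mem_AB c k j ab :
  (ab \in AB c k j) = (ab.1 \in Fil (iota (c + j) (k - j))) && (ab.2 \in Fil (iota c j)).
Proof.
apply/allpairsP/andP => [[[a b] [/= Ha Hb ->]] // | [Ha Hb]].
by exists ab; case: ab Ha Hb.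
Qed.

Lemma Fil_perm a s : a \in Fil s -> P a /\ perm_eq a s.
Proof. by rewrite mem_Fil => /andP. Qed.

Section Piece.
Variables (c k j : nat) (a b : seq nat).
Hypothesis (Hj : j <= k) (Ha : a \in Fil (iota (c + j) (k - j))) (Hb : b \in Fil (iota c j)).

Lemma piece_perm : perm_eq (a ++ (c + k) :: b) (iota c k.+1).
Proof.
have [_ Pa] := Fil_perm Ha; have [_ Pb] := Fil_perm Hb.
exact: (recompose Hj Pa Pb).
Qed.

Lemma piece_uniq : uniq (a ++ (c + k) :: b).
Proof. by rewrite (perm_uniq piece_perm) iota_uniq. Qed.

Lemma piece_memA x : x \in a -> c + j <= x < c + k.
Proof.
have [_ Pa] := Fil_perm Ha; rewrite (perm_mem Pa) mem_iota => H.
move: H Hj; clear; lia.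
Qed.

Lemma piece_memB x : x \in b -> c <= x < c + j.
Proof.
have [_ Pb] := Fil_perm Hb; rewrite (perm_mem Pb) mem_iota => H.
move: H; clear; lia.
Qed.

Lemma piece_allA : all (fun x => x < c + k) a.
Proof. by apply/allP => x /piece_memA; clear; lia. Qed.

Lemma piece_allB : all (fun x => x < c + k) b.
Proof. by apply/allP => x /piece_memB; move: Hj; clear; lia. Qed.

Lemma piece_sizeA : size a = k - j.
Proof. by have [_ Pa] := Fil_perm Ha; rewrite (perm_size Pa) size_iota. Qed.

Lemma piece_sizeB : size b = j.
Proof. by have [_ Pb] := Fil_perm Hb; rewrite (perm_size Pb) size_iota. Qed.

Lemma piece_cross x y : x \in a -> y \in b -> y < x.
Proof. by move=> /piece_memA H1 /piece_memB H2; move: H1 H2; clear; lia. Qed.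

Lemma piece_P : P (a ++ (c + k) :: b) <->
  (1 < size (a ++ (c + k) :: b) -> C231 (a ++ (c + k) :: b)).
Proof.
have [Pa _] := Fil_perm Ha; have [Pb _] := Fil_perm Hb.
rewrite (P_cat piece_uniq piece_allA piece_allB); split; first by case.
by move=> H; split => //; apply: piece_cross.
Qed.

End Piece.

Lemma L_uniq c k : uniq (L c k).
Proof.
rewrite /L; apply: allpairs_uniq_dep; first exact: iota_uniq.
  move=> j _; apply: allpairs_uniq.
  - exact: filter_uniq (permutations_uniq _).
  - exact: filter_uniq (permutations_uniq _).
  - by move=> [? ?] [? ?] _ _.
move=> u v /allpairsPdep [j1 [ab1 [Hj1 Hab1 E1]]] /allpairsPdep [j2 [ab2 [Hj2 Hab2 E2]]].
subst u v => /= E.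
move: Hab1 Hab2; rewrite !mem_AB => /andP [Ha1 Hb1] /andP [Ha2 Hb2].
rewrite mem_iota in Hj1; rewrite mem_iota in Hj2.
have Hk1 : j1 <= k by move: Hj1; clear; lia.
have Hk2 : j2 <= k by move: Hj2; clear; lia.
have n1 : c + k \notin ab1.1.
  by apply/negP => /(piece_memA Hk1 Ha1); clear; lia.
have n2 : c + k \notin ab2.1.
  by apply/negP => /(piece_memA Hk2 Ha2); clear; lia.
have [Ea Eb] := inj_split n1 n2 E.
have Ej : j1 = j2 by rewrite -(piece_sizeB Hb1) -(piece_sizeB Hb2) Eb.
subst j2; move: Ea Eb; case: ab1 {E Ha1 Hb1 n1} => a1 b1; case: ab2 {Ha2 Hb2 n2} => a2 b2 /= -> -> //.
Qed.

Lemma L_mem c k t : (t \in filter P (L c k)) = (t \in Fil (iota c k.+1)).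
Proof.
rewrite mem_filter mem_Fil; case HPt: (P t) => //=.
apply/idP/idP.
  move=> /allpairsPdep [j [ab [Hj Hab ->]]].
  move: Hab; rewrite mem_AB mem_iota in Hj * => /andP [Ha Hb].
  apply: (piece_perm _ Ha Hb); move: Hj; clear; lia.
move=> Hp; have [j [a [b [Hj -> Ha Hb]]]] := decomp Hp HPt.
apply/allpairsPdep; exists j, (a, b); split => //.
  by rewrite mem_iota; move: Hj; clear; lia.
by rewrite mem_AB; apply/andP.
Qed.

Lemma N_rec c k : N c k.+1 =
  sumn [seq count (fun ab => P (ab.1 ++ (c + k) :: ab.2)) (AB c k j) | j <- iota 0 k.+1].
Proof.
rewrite /N -size_filter.
have -> : size (filter P (permutations (iota c k.+1))) = size (filter P (L c k)).
  apply: perm_size; apply: uniq_perm.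
  - exact: filter_uniq (permutations_uniq _).
  - exact: filter_uniq (L_uniq _ _).
  - by move=> t; rewrite L_mem.
rewrite size_filter /L count_flatten -map_comp; congr sumn; apply: eq_map => j /=.
by rewrite count_map.
Qed.

Definition PP c k (ab : seq nat * seq nat) := P (ab.1 ++ (c + k) :: ab.2).

Lemma term_mid c k j : 0 < j < k ->
  count (PP c k) (AB c k j) = N (c + j) (k - j) * N c j.
Proof.
move=> Hjk; have Hj : j <= k by move: Hjk; clear; lia.
rewrite (@eq_in_count _ _ predT); first by rewrite count_predT /AB size_allpairs !size_Fil.
move=> [a b]; rewrite mem_AB => /andP [/= Ha Hb]; rewrite /PP /=.
apply/(piece_P Hj Ha Hb) => _.
apply/(C231_cat (piece_allA Hj Ha) (piece_allB Hj Hb) (piece_cross Hj Ha Hb)).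
right; right; split.
- by rewrite -size_eq0 (piece_sizeA Ha); move: Hjk; clear; lia.
- by rewrite -size_eq0 (piece_sizeB Hb); move: Hjk; clear; lia.
Qed.

Lemma term_top c k : count (PP c k) (AB c k k) = if k == 1 then 0 else N c k.
Proof.
rewrite /AB subnn Fil_nil allpairs1l count_map.
rewrite (@eq_in_count _ _ (fun _ => k != 1)); last first.
  move=> b Hb /=; rewrite /PP /=.
  have Hnil : [::] \in Fil (iota (c + k) (k - k)) by rewrite subnn Fil_nil inE.
  have H := piece_P (leqnn k) Hnil Hb; rewrite /= in H.
  have Hs := piece_sizeB Hb.
  have [Pb _] := Fil_perm Hb.
  apply/idP/idP.
    move=> /H Hc; apply/negP => /eqP Ek; rewrite Ek in Hs Hc.
    by apply: (C231_small (b := c + 1 :: b)); [rewrite /= Hs | apply: Hc; rewrite /= Hs].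
  move=> Hk1; apply/H; rewrite /= Hs => Hk.
  apply/(C231_cons (piece_allB (leqnn k) Hb)); apply: good_max.
  - by move: Pb => /andP [].
  - by rewrite Hs; move: Hk Hk1; clear; lia.
case: eqP => _; first by rewrite count_pred0.
by rewrite count_predT size_Fil.
Qed.

Lemma term_bot c k : 0 < k -> count (PP c k) (AB c k 0) = if k == 1 then 0 else N c k.
Proof.
move=> Hk0.
rewrite /AB addn0 subn0 Fil_nil allpairs1r count_map.
rewrite (@eq_in_count _ _ (fun _ => k != 1)); last first.
  move=> a Ha /=; rewrite /PP /=.
  have Hnil : [::] \in Fil (iota c 0) by rewrite Fil_nil inE.
  have Ha' : a \in Fil (iota (c + 0) (k - 0)) by rewrite addn0 subn0.
  have H := piece_P (leq0n k) Ha' Hnil; rewrite /= in H.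
  have Hs := piece_sizeA Ha'; rewrite subn0 in Hs.
  have [Pa _] := Fil_perm Ha.
  rewrite size_cat /= Hs in H.
  apply/idP/idP.
    move=> /H Hc; apply/negP => /eqP Ek; rewrite Ek in Hs Hc.
    by apply: (C231_small (b := a ++ [:: c + 1])); [rewrite size_cat /= Hs | apply: Hc].
  move=> Hk1; apply/H => Hk.
  apply/(C231_rcons (piece_allA (leq0n k) Ha')); apply: good_max.
  - by move: Pa => /andP [].
  - by rewrite Hs; move: Hk Hk1; clear; lia.
case: eqP => _; first by rewrite count_pred0.
by rewrite count_predT size_Fil.
Qed.

Definition T k j x y := if j == k then (if k == 1 then 0 else y)
  else if j == 0 then (if k == 1 then 0 else x) else x * y.

Lemma N_rec2 c k : N c k.+1 = sumn [seq T k j (N (c + j) (k - j)) (N c j) | j <- iota 0 k.+1].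
Proof.
rewrite N_rec; congr sumn; apply/eq_in_map => j; rewrite mem_iota => Hj.
rewrite /T; case: (altP (j =P k)) => [->|Hjk]; first exact: term_top.
case: (altP (j =P 0)) => [E|Hj0].
  subst j; rewrite term_bot ?addn0 ?subn0 //; move: Hjk; clear; lia.
rewrite term_mid //; move: Hjk Hj0 Hj; clear; lia.
Qed.

Lemma N0 c : N c 0 = 1.
Proof. by rewrite /N /= P_nil. Qed.

Lemma N_inv n c : N c n = N 0 n.
Proof.
elim/ltn_ind: n c => [[|k]] IH c; first by rewrite !N0.
rewrite !N_rec2; congr sumn; apply/eq_in_map => j; rewrite mem_iota => Hj.
rewrite (IH j) ?(IH (k - j)) // ?(IH (k - j) _ (0 + j)) //; move: Hj; clear; lia.
Qed.

Definition an n := N 0 n.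

Lemma an_rec k : an k.+1 = sumn [seq T k j (an (k - j)) (an j) | j <- iota 0 k.+1].
Proof.
rewrite /an N_rec2; congr sumn; apply/eq_in_map => j _.
by rewrite !(N_inv _ (0 + j)).
Qed.

Lemma an0 : an 0 = 1. Proof. exact: N0. Qed.
Lemma an1 : an 1 = 1. Proof. by rewrite an_rec /= an0. Qed.
Lemma an2 : an 2 = 0. Proof. by rewrite an_rec. Qed.

Lemma an_rec3 r : an r.+3 = an r.+2 + an r.+2 + \sum_(0 <= j < r.+1) an (r.+1 - j) * an j.+1.
Proof.
rewrite an_rec sumnE big_map -/(index_iota 0 r.+3).
rewrite [in LHS]big_nat_recl // [in LHS]big_nat_recr //= /T /= eqxx subn0.
rewrite -!addnA; congr (_ + _); rewrite addnC; congr (_ + _).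
rewrite big_nat_cond [RHS]big_nat_cond; apply: eq_bigr => j /andP [/andP [_ Hj] _].
have -> : (j.+1 == r.+2) = false by apply/negbTE; move: Hj; clear; lia.
by rewrite subSS.
Qed.

Open Scope ring_scope.

Definition tt (m : nat) : rat :=
  if m is m'.+1 then (if m' is _.+1 then -2 * (an m')%:R else -2) else 1.

Lemma conv_t m : \sum_(k < m.+1) tt k * tt (m - k) = radicand m.
Proof.
case: m => [|[|[|[|r]]]].
- by rewrite big_ord_recl big_ord0 /radicand /=; lra.
- by rewrite !big_ord_recl big_ord0 /radicand /=; lra.
- by rewrite !big_ord_recl big_ord0 /radicand /= an1; lra.
- by rewrite !big_ord_recl big_ord0 /radicand /= an1 an2; lra.
rewrite -(big_mkord xpredT (fun k => tt k * tt (r.+4 - k))).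
rewrite big_nat_recl // big_nat_recr //= big_nat_recl // big_nat_recr //=.
rewrite subnn (_ : (r.+4 - r.+3 = 1)%N); last by clear; lia.
rewrite (_ : \sum_(0 <= i < r.+1) -2 * (an i.+1)%:R * tt (r.+4 - i.+2) =
   4 * \sum_(0 <= i < r.+1) ((an (r.+1 - i))%:R * (an i.+1)%:R)); last first.
  rewrite mulr_sumr big_nat_cond [RHS]big_nat_cond; apply: eq_bigr => i /andP [/andP [_ Hi] _].
  rewrite (_ : (r.+4 - i.+2 = (r - i).+2)%N); last by move: Hi; clear; lia.
  rewrite /= (_ : (r - i).+1 = r.+1 - i)%N; last by move: Hi; clear; lia.
  ring.
have H := congr1 (fun n : nat => n%:R : rat) (an_rec3 r).
rewrite /= !natrD natr_sum in H.
rewrite (_ : \sum_(0 <= i < r.+1) ((an (r.+1 - i))%:R * (an i.+1)%:R : rat) =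
   \sum_(0 <= i < r.+1) (an (r.+1 - i) * an i.+1)%:R); last by apply: eq_bigr => i _; rewrite natrM.
rewrite /radicand /=; lra.
Qed.

Lemma conv_split (f : nat -> rat) q : \sum_(k < q.+2) f k * f (q.+1 - k)%N =
  f 0%N * f q.+1 + \sum_(0 <= i < q) f i.+1 * f (q - i)%N + f q.+1 * f 0%N.
Proof.
rewrite -(big_mkord xpredT (fun k => f k * f (q.+1 - k)%N)).
rewrite big_nat_recl // big_nat_recr //= subn0 subnn addrA.
by congr (_ + _ + _); apply: eq_bigr => i _; rewrite subSS.
Qed.

Lemma sqrt_unique s : is_sqrt_series radicand s -> forall m, s m = tt m.
Proof.
move=> [H0 H] m; elim/ltn_ind: m => [[|q]] IH; first by rewrite H0.
have E1 := H q.+1; have E2 := conv_t q.+1.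
rewrite conv_split in E1; rewrite conv_split in E2.
have EM : \sum_(0 <= i < q) s i.+1 * s (q - i)%N = \sum_(0 <= i < q) tt i.+1 * tt (q - i)%N.
  rewrite big_nat_cond [RHS]big_nat_cond; apply: eq_bigr => i /andP [/andP [_ Hi] _].
  rewrite !IH //; move: Hi; clear; lia.
have T0 : tt 0 = 1 by [].
rewrite EM H0 in E1; rewrite T0 in E2; lra.
Qed.

Close Scope ring_scope.

Theorem corollary6 :
  (exists s : nat -> rat, is_sqrt_series radicand s) /\
  forall (n : nat) (s : nat -> rat), (1 <= n)%N ->
    is_sqrt_series radicand s ->
    ((count (fun p => avoids p [:: 1; 3; 2] && good p)
            (permutations (iota 1 n)))%:R : rat) = gf_coef s n.
Proof.
split; first by exists tt; split; [by [] | exact: conv_t].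
move=> n s Hn Hs.
have -> : count (fun p => avoids p [:: 1; 3; 2] && good p) (permutations (iota 1 n)) = an n.
  by rewrite /an -(N_inv n 1).
rewrite /gf_coef /numer (sqrt_unique Hs).
case: n Hn => [//|n] _ /=; lra.
Qed.
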